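(* Let $\lambda/\mu$ be a skew partition with $\lambda'_1=\mu'_1$ (i.e. the first column of $\lambda/\mu$ contains no boxes), and let $\rho/\nu$ be the skew partition obtained by removing the first column of the skew diagram $\lambda/\mu$ (so $\rho_i=\lambda_i-1$ and $\nu_i=\mu_i-1$ for $1\le i\le \lambda'_1$). Then the Jacobi–Trudi matrices $J_{\lambda/\mu}$ and $J_{\rho/\nu}$ are stably equivalent over the ring $\Lambda$ of symmetric functions, and the dual Jacobi–Trudi matrices $D_{\lambda/\mu}$ and $D_{\rho/\nu}$ are stably equivalent over $\Lambda$.
   Context: For partitions $\mu\subseteq\lambda$, $J_{\lambda/\mu}=(h_{\lambda_i-\mu_j-i+j})_{i,j=1}^{\ell(\lambda)}$ and $D_{\lambda/\mu}=(e_{\lambda'_i-\mu'_j-i+j})_{i,j=1}^{\ell(\lambda')}$, where $\ell$ denotes length, $\lambda'$ the conjugate partition, $h_k,e_k$ the complete and elementary symmetric functions, $h_0=e_0=1$, $h_k=e_k=0$ for $k<0$. Two matrices over a commutative ring $R$ are stably equivalent if one can be transformed into the other by a finite sequence of operations $M\mapsto AM$, $M\mapsto MA$ ($A$ invertible over $R$), $M\mapsto \begin{pmatrix}1&0\\0&M\end{pmatrix}$, and the inverse of the last. *)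

(* Defs.v *)
From HB Require Import structures.
From mathcomp Require Import all_boot all_order all_algebra.
From mathcomp Require Import monalg.
From Stdlib Require Import Relations.

Set Implicit Arguments.
Unset Strict Implicit.
Unset Printing Implicit Defensive.

Import GRing.Theory.
Local Open Scope ring_scope.

(* The ring Lambda of symmetric functions (over Z), presented as the
   polynomial ring Z[h_1, h_2, ...] in the algebraically independent
   complete symmetric functions h_k (Macdonald, I (2.8)).              *)
Definition Lam : Type := {malg int[{cmonom nat}]}.

Definition hsym (k : int) : Lam :=
  match k with
  | Posz 0 => 1
  | Posz n => << ucm n >>
  | Negz _ => 0
  end.

(* elementary symmetric functions, determined by the fundamental identity
   sum_{i=0}^n (-1)^i e_i h_{n-i} = 0 (n >= 1), e_0 = 1, i.e.
   e_n = sum_{i=1}^n (-1)^(i-1) h_i e_{n-i}.  [esyms n] = [e_0; ...; e_n]. *)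
Fixpoint esyms (n : nat) : seq Lam :=
  match n with
  | 0 => [:: 1]
  | n'.+1 =>
      let s := esyms n' in
      rcons s (\sum_(i < n'.+1) (-1) ^+ i * hsym (Posz i.+1) * nth 0 s (n' - i))
  end.

Definition esym (k : int) : Lam :=
  match k with
  | Posz n => nth 0 (esyms n) n
  | Negz _ => 0
  end.

(* Partitions: weakly decreasing sequences of positive integers
   (lambda_1 >= lambda_2 >= ... >= lambda_l > 0); lambda_i = nth 0 la (i-1). *)
Definition is_partition (la : seq nat) : bool :=
  sorted geq la && all (fun x => 0 < x)%N la.

Definition part_sub (mu la : seq nat) : Prop :=
  forall i : nat, (nth 0 mu i <= nth 0 la i)%N.

Definition conj_part (la : seq nat) : seq nat :=
  [seq count (fun x => j <= x)%N la | j <- iota 1 (head 0%N la)].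

Definition conj_at (la : seq nat) (j : nat) : nat := nth 0%N (conj_part la) j.-1.

Definition remove_first_col (la : seq nat) : seq nat :=
  [seq x <- map predn la | (0 < x)%N].

(* Jacobi--Trudi matrix J_{la/mu} = (h_{la_i - mu_j - i + j})_{i,j=1}^{l(la)}
   (with 0-based indices i, j : 'I_l(la), the shift cancels). *)
Definition JT (la mu : seq nat) : 'M[Lam]_(size la) :=
  \matrix_(i < size la, j < size la)
    hsym ((nth 0%N la i)%:Z - (nth 0%N mu j)%:Z - (i : nat)%:Z + (j : nat)%:Z).

Definition DJT (la mu : seq nat) : 'M[Lam]_(size (conj_part la)) :=
  \matrix_(i < size (conj_part la), j < size (conj_part la))
    esym ((nth 0%N (conj_part la) i)%:Z - (nth 0%N (conj_part mu) j)%:Z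
          - (i : nat)%:Z + (j : nat)%:Z).

Record packed_mx (R : Type) := PackMx {
  pm_rows : nat; pm_cols : nat; pm_mx : 'M[R]_(pm_rows, pm_cols) }.
Arguments PackMx {R} [pm_rows pm_cols] pm_mx.

Definition invertible_mx (R : comNzRingType) (n : nat) (A : 'M[R]_n) : Prop :=
  exists B : 'M[R]_n, A *m B = 1%:M /\ B *m A = 1%:M.

Inductive stable_step (R : comNzRingType) : packed_mx R -> packed_mx R -> Prop :=
  | st_left m n (A : 'M[R]_m) (M : 'M[R]_(m, n)) :
      invertible_mx A -> stable_step (PackMx M) (PackMx (A *m M))
  | st_right m n (A : 'M[R]_n) (M : 'M[R]_(m, n)) :
      invertible_mx A -> stable_step (PackMx M) (PackMx (M *m A))
  | st_stab m n (M : 'M[R]_(m, n)) :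
      stable_step (PackMx M) (PackMx (block_mx (1%:M : 'M[R]_1) 0 0 M))
  | st_destab m n (M : 'M[R]_(m, n)) :
      stable_step (PackMx (block_mx (1%:M : 'M[R]_1) 0 0 M)) (PackMx M).

Definition stably_equivalent (R : comNzRingType) (m n p q : nat)
    (M : 'M[R]_(m, n)) (N : 'M[R]_(p, q)) : Prop :=
  clos_refl_trans (packed_mx R) (@stable_step R) (PackMx M) (PackMx N).

(* Main.v *)
Require Import Defs.
From HB Require Import structures.
From mathcomp Require Import all_boot all_order all_algebra.
From mathcomp Require Import monalg.
From mathcomp Require Import all_fingroup zify.
From Stdlib Require Import Relations.
Set Implicit Arguments. Unset Strict Implicit. Unset Printing Implicit Defensive.
Import GRing.Theory.

Section Gen.
Variable R : comNzRingType.
Local Open Scope ring_scope.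

Lemma se_refl m n (M : 'M[R]_(m,n)) : stably_equivalent M M.
Proof. exact: rt_refl. Qed.

Lemma se_trans m n p q r s (M : 'M[R]_(m,n)) (N : 'M[R]_(p,q)) (P : 'M[R]_(r,s)) :
  stably_equivalent M N -> stably_equivalent N P -> stably_equivalent M P.
Proof. exact: rt_trans. Qed.

Lemma se_left m n (A : 'M[R]_m) (M : 'M[R]_(m,n)) : invertible_mx A ->
  stably_equivalent M (A *m M).
Proof. by move=> h; apply: rt_step; constructor. Qed.

Lemma se_right m n (A : 'M[R]_n) (M : 'M[R]_(m,n)) : invertible_mx A ->
  stably_equivalent M (M *m A).
Proof. by move=> h; apply: rt_step; constructor. Qed.

Lemma se_destab m n (M : 'M[R]_(m,n)) :
  stably_equivalent (block_mx (1%:M : 'M[R]_1) 0 0 M) M.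
Proof. by apply: rt_step; constructor. Qed.

Lemma perm_inv n (s : {perm 'I_n}) : invertible_mx (perm_mx s : 'M[R]_n).
Proof.
exists (perm_mx s^-1); rewrite -!perm_mxM mulgV mulVg perm_mx1; split=> //.
Qed.

Lemma nil_inv n (C : 'M[R]_n) : C *m C = 0 -> invertible_mx (1%:M - C).
Proof.
move=> h; exists (1%:M + C).
split.
  by rewrite mulmxDr !mulmxBl !mul1mx h subr0 mulmx1 subrK.
by rewrite mulmxBr !mulmxDl !mulmx1 mul1mx h addr0 addrK.
Qed.

Definition tr_pack (p : packed_mx R) : packed_mx R := PackMx (pm_mx p)^T.

Lemma tr_step p q : stable_step p q -> stable_step (tr_pack p) (tr_pack q).
Proof.
case=> m n.
- move=> A M [B [h1 h2]]; rewrite /tr_pack /= (trmx_mul A M); constructor.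
  by exists B^T; rewrite -!trmx_mul h1 h2 trmx1.
- move=> A M [B [h1 h2]]; rewrite /tr_pack /= (trmx_mul M A); constructor.
  by exists B^T; rewrite -!trmx_mul h1 h2 trmx1.
- move=> M; rewrite /tr_pack /= tr_block_mx trmx1 !trmx0; constructor.
- move=> M; rewrite /tr_pack /= tr_block_mx trmx1 !trmx0; constructor.
Qed.

Lemma se_tr m n p q (M : 'M[R]_(m,n)) (N : 'M[R]_(p,q)) :
  stably_equivalent M N -> stably_equivalent M^T N^T.
Proof.
rewrite /stably_equivalent.
have: forall x y, clos_refl_trans _ (@stable_step R) x y ->
   clos_refl_trans _ (@stable_step R) (tr_pack x) (tr_pack y).
  move=> x y; elim=> [a b /tr_step h|a|a b c _ h1 _ h2]; first exact: rt_step.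
    exact: rt_refl.
  exact: rt_trans h1 h2.
by move=> H /H.
Qed.

Lemma key_col m n (M : 'M[R]_(m.+1, n.+1)) (i0 : 'I_m.+1) (j0 : 'I_n.+1) :
  (forall i, M i j0 = (i == i0)%:R) ->
  stably_equivalent M (\matrix_(k, l) M (lift i0 k) (lift j0 l)).
Proof.
move=> hM.
pose C : 'M[R]_n.+1 := \matrix_(k, l) if (k == j0) && (l != j0) then M i0 l else 0.
have CC : C *m C = 0.
  apply/matrixP=> k l; rewrite !mxE; apply: big1 => t _; rewrite !mxE.
  by case: (t == j0) (k == j0) (l == j0) => [] [] []; rewrite /= ?mul0r ?mulr0 // andbF mul0r.
pose M' := M *m (1%:M - C).
have eM' : forall i j, M' i j = M i j - (i == i0)%:R * (if j != j0 then M i0 j else 0).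
  move=> i j; rewrite /M' mulmxBr mulmx1 !mxE; congr (_ - _).
  rewrite (bigD1 j0) //= big1 ?addr0; last first.
    by move=> t /negbTE ht; rewrite !mxE ht mulr0.
  by rewrite !mxE eqxx /= hM.
have dM : M *m (1%:M - C) = M' by [].
clearbody M'.
pose s := lift_perm ord0 i0 1. pose t := lift_perm ord0 j0 1.
have e1 : PackMx (block_mx (1%:M : 'M[R]_1) 0 0 (\matrix_(k, l) M (lift i0 k) (lift j0 l)))
   = PackMx (row_perm s (col_perm t M')).
  congr PackMx; apply/matrixP=> i j.
  rewrite -[i]splitK -[j]splitK.
  have nl : forall p (a : 'I_p.+1) b, (lift a b == a) = false.
    by move=> p a b; apply/negbTE; rewrite eq_sym neq_lift.
  have L0 : forall p, lshift p (ord0 : 'I_1) = ord0 :> 'I_(1 + p) by move=> p; apply: val_inj.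
  have L1 : forall p (k : 'I_p), rshift 1 k = lift ord0 k :> 'I_(1 + p) by move=> p k; apply: val_inj.
  case: (split i) => [i'|k]; case: (split j) => [j'|l]; rewrite /= ?block_mxEul ?block_mxEur
    ?block_mxEdl ?block_mxEdr !mxE; rewrite ?(ord1 i') ?(ord1 j') ?L0 ?L1 ?lift_perm_id
    ?lift_perm_lift ?perm1 eM' ?hM /=.
  all: rewrite ?eqxx ?nl /= ?mul1r ?mul0r ?subr0 ?subrr //.
apply: (se_trans (se_right M (nil_inv CC))); rewrite dM.
apply: (@se_trans _ _ _ _ _ _ _ (col_perm t M')).
  by rewrite col_permE; apply: se_right; apply: perm_inv.
apply: (@se_trans _ _ _ _ _ _ _ (row_perm s (col_perm t M'))).
  by rewrite row_permE; apply: se_left; apply: perm_inv.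
rewrite /stably_equivalent -e1; exact: se_destab.
Qed.


Lemma key_row m n (M : 'M[R]_(m.+1, n.+1)) (i0 : 'I_m.+1) (j0 : 'I_n.+1) :
  (forall j, M i0 j = (j == j0)%:R) ->
  stably_equivalent M (\matrix_(k, l) M (lift i0 k) (lift j0 l)).
Proof.
move=> hM.
have h := @key_col n m (M^T) j0 i0 (fun i => ltac:(by rewrite mxE hM)).
have := se_tr h; rewrite trmxK.
congr stably_equivalent; apply/matrixP=> i j; rewrite !mxE //.
Qed.

Definition mk n (f : nat -> nat -> R) : 'M[R]_n := \matrix_(i < n, j < n) f i j.

Lemma mk_ext n f g : (forall i j, (i < n)%N -> (j < n)%N -> f i j = g i j) -> mk n f = mk n g.
Proof. by move=> h; apply/matrixP=> i j; rewrite !mxE h. Qed.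

Lemma L_DJT n f : (forall i, (0 < i <= n)%N -> f i 0%N = 0) -> f 0%N 0%N = 1 ->
  stably_equivalent (mk n.+1 f) (mk n (fun i j => f i.+1 j.+1)).
Proof.
move=> h0 h1.
have := @key_col n n (mk n.+1 f) ord0 ord0.
have e : (\matrix_(k, l) (mk n.+1 f) (lift ord0 k) (lift ord0 l)) = mk n (fun i j => f i.+1 j.+1).
  by apply/matrixP=> i j; rewrite !mxE !lift0.
rewrite e; apply=> i; rewrite mxE.
case: i => [[|i] hi] /=; first by rewrite h1.
by rewrite h0.
Qed.

Lemma L_JT N n f : (n <= N)%N ->
  (forall i j, (n <= i)%N -> (i < N)%N -> (j < i)%N -> f i j = 0) ->
  (forall i, (n <= i)%N -> (i < N)%N -> f i i = 1) ->
  stably_equivalent (mk N f) (mk n f).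
Proof.
elim: N => [|N IH] hn h0 h1.
  by move: hn; rewrite leqn0 => /eqP ->; apply: se_refl.
case: (ltngtP n N.+1) => [hn'|hn2|->]; last (by apply: se_refl); last by rewrite ltnNge hn in hn2.
apply: se_trans (IH hn' (fun i j a b => h0 i j a (ltnW b)) (fun i a b => h1 i a (ltnW b))).
have := @key_row N N (mk N.+1 f) ord_max ord_max.
have e : (\matrix_(k, l) (mk N.+1 f) (lift ord_max k) (lift ord_max l)) = mk N f.
  by apply/matrixP=> i j; rewrite !mxE !lift_max.
rewrite e; apply=> j; rewrite mxE /=.
case: (ltngtP j N) => hj.
- rewrite h0 //; have -> : (j == ord_max) = false by apply/negbTE; rewrite -val_eqE /= neq_ltn hj.
  by [].
- by move: (ltn_ord j); rewrite ltnS leqNgt hj.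
- have -> : j = ord_max by apply: val_inj.
  by rewrite eqxx h1.
Qed.

End Gen.

Lemma nth_le (s : seq nat) b i : all (fun y => y <= b) s -> nth 0 s i <= b.
Proof.
move=> h; case: (ltnP i (size s)) => hi; last by rewrite nth_default.
by move/allP: h; apply; apply: mem_nth.
Qed.

Lemma rfc_nth s i : sorted geq s -> nth 0 (remove_first_col s) i = (nth 0 s i).-1.
Proof.
elim: s i => [|x s IH] i hs; first by rewrite !nth_nil.
have hs' : sorted geq s := path_sorted hs.
have hall : all (geq x) s.
  by apply: order_path_min hs => a b c h1 h2; apply: leq_trans h2 h1.
rewrite /remove_first_col /=.
case: ifP => hx.
  by case: i => [|i] //=; rewrite -IH.
have x1 : x <= 1 by move: hx; rewrite lt0n => /negbFE/eqP; case: x {hall hs} => [|[|]].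
have hall1 : all (fun y => y <= 1) (x :: s).
  rewrite /= x1 /=; apply/allP=> y /(allP hall) /= hy; exact: leq_trans hy x1.
have rnil : [seq y <- [seq y.-1 | y <- s] | 0 < y] = [::].
  apply/eqP; rewrite -size_eq0 size_filter count_map.
  rewrite (@eq_in_count _ _ pred0) ?count_pred0 // => y ys /=.
  have := allP hall1 y; rewrite inE ys orbT => /(_ isT) hy.
  by apply/negbTE; rewrite -leqNgt; lia.
rewrite rnil nth_nil.
have := nth_le i hall1; lia.
Qed.


Lemma size_conj s : size (conj_part s) = head 0 s.
Proof. by rewrite /conj_part size_map size_iota. Qed.

Lemma nth_conj s j : nth 0 (conj_part s) j =
  if j < head 0 s then count (fun x => j.+1 <= x) s else 0.
Proof.
rewrite /conj_part; case: ifP => hj.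
  by rewrite (nth_map 0) ?size_iota // nth_iota.
by rewrite nth_default // size_map size_iota leqNgt hj.
Qed.

Lemma count_rfc s j : count (fun x => j.+1 <= x) (remove_first_col s) =
  count (fun x => j.+2 <= x) s.
Proof.
rewrite /remove_first_col count_filter count_map; apply: eq_count => x /=; lia.
Qed.

Lemma head_rfc s : sorted geq s -> head 0 (remove_first_col s) = (head 0 s).-1.
Proof. by move=> h; rewrite -!nth0 rfc_nth. Qed.

Lemma conj_rfc s j : sorted geq s ->
  nth 0 (conj_part (remove_first_col s)) j = nth 0 (conj_part s) j.+1.
Proof.
move=> h; rewrite !nth_conj head_rfc // ltn_predRL count_rfc //.
Qed.

Lemma size_rfc s : size (remove_first_col s) <= size s.
Proof. by rewrite /remove_first_col size_filter -(size_map predn); apply: count_size. Qed.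

Lemma hsym_neg (k : int) : (k < 0)%R -> hsym k = 0%R.
Proof. by case: k. Qed.
Lemma esym_neg (k : int) : (k < 0)%R -> Defs.esym k = 0%R.
Proof. by case: k. Qed.

Theorem lemma4p1 (la mu : seq nat) :
  is_partition la -> is_partition mu -> part_sub mu la ->
  conj_at la 1 = conj_at mu 1 ->
  stably_equivalent (JT la mu) (JT (remove_first_col la) (remove_first_col mu)) /\
  stably_equivalent (DJT la mu) (DJT (remove_first_col la) (remove_first_col mu)).
Proof.
move=> pla pmu sub hc.
case/andP: pla => sla posla; case/andP: pmu => smu posmu.
have [la0|lane] : la = [::] \/ (0 < size la)%N by case: la {sla posla sub hc}; [left|right].
  subst la; case: mu smu posmu sub hc => [|y mu'] smu posmu sub hc.
    by split; apply: rt_refl.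
  by have := sub 0%N; move: posmu => /= /andP [] /=; lia.
have hla : forall i, (i < size la)%N -> (0 < nth 0 la i)%N.
  by move=> i hi; apply: (allP posla); apply: mem_nth.
have hmu : forall i, (i < size mu)%N -> (0 < nth 0 mu i)%N.
  by move=> i hi; apply: (allP posmu); apply: mem_nth.
have c0 : forall s, all (fun x => 0 < x)%N s -> (0 < size s)%N ->
    nth 0 (conj_part s) 0 = size s.
  move=> s ps hs; rewrite nth_conj; case: s ps hs => [//|x s] /= /andP [-> ps] _.
  by rewrite add1n; congr S; apply/eqP; rewrite -all_count.
have mune : (0 < size mu)%N.
  move: hc; case E: mu => [|y m] //; rewrite /conj_at /= c0 //.
  by move=> h; rewrite h in lane.
have szmu : size mu = size la.
  by move: hc; rewrite /conj_at /= !c0.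
set rho := remove_first_col la; set nu := remove_first_col mu.
have rn : forall i, nth 0 rho i = (nth 0 la i).-1 by move=> i; apply: rfc_nth.
have nn : forall i, nth 0 nu i = (nth 0 mu i).-1 by move=> i; apply: rfc_nth.
have srl : (size rho <= size la)%N by apply: size_rfc.
split.
- pose F (l m : seq nat) := fun i j : nat =>
    hsym ((nth 0%N l i)%:Z - (nth 0%N m j)%:Z - i%:Z + j%:Z)%R.
  have eJ : forall l m, JT l m = mk (size l) (F l m).
    by move=> l m; apply/matrixP=> i j; rewrite !mxE.
  have one : forall i, (size rho <= i)%N -> (i < size la)%N ->
      nth 0 la i = 1%N /\ nth 0 mu i = 1%N.
    move=> i h1 h2; have := rn i; rewrite nth_default // => e.
    have := hla i h2; have := hmu i; rewrite szmu => /(_ h2); have := sub i; lia.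
  rewrite !eJ.
  apply: (se_trans (@L_JT _ (size la) (size rho) (F la mu) srl _ _)).
  + move=> i j h1 h2 h3; rewrite /F; apply: hsym_neg.
    have [e1 _] := one i h1 h2; rewrite e1.
    have := hmu j; rewrite szmu => /(_ (ltn_trans h3 h2)); lia.
  + move=> i h1 h2; have [e1 e2] := one i h1 h2; rewrite /F e1 e2.
    set k := (_ + _)%R; have -> : k = 0%R by rewrite /k; lia.
    by [].
  have -> : mk (size rho) (F rho nu) = mk (size rho) (F la mu); last by apply: rt_refl.
  apply: mk_ext => i j hi hj; rewrite /F rn nn.
  have := hla i (leq_trans hi srl); have := hmu j; rewrite szmu => /(_ (leq_trans hj srl)).
  move=> a b; congr hsym; lia.
- pose G (l m : seq nat) := fun i j : nat =>
    Defs.esym ((nth 0%N (conj_part l) i)%:Z - (nth 0%N (conj_part m) j)%:Z - i%:Z + j%:Z)%R.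
  have eD : forall l m, DJT l m = mk (size (conj_part l)) (G l m).
    by move=> l m; apply/matrixP=> i j; rewrite !mxE.
  rewrite !eD !size_conj /rho head_rfc //.
  have ha : (0 < head 0 la)%N by rewrite -nth0; apply: hla.
  set c := (head 0 la).-1.
  have -> : head 0 la = c.+1 by rewrite /c; lia.
  apply: (se_trans (@L_DJT _ c (G la mu) _ _)).
  + move=> i /andP [h1 h2]; rewrite /G; apply: esym_neg.
    rewrite c0 // szmu.
    have : (nth 0 (conj_part la) i <= size la)%N.
      rewrite nth_conj; case: ifP => // _; exact: count_size.
    lia.
  + rewrite /G !c0 // szmu.
    set k := (_ + _)%R; have -> : k = 0%R by rewrite /k; lia.
    by [].
  have -> : mk c (G rho nu) = mk c (fun i j => G la mu i.+1 j.+1); last by apply: rt_refl.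
  apply: mk_ext => i j hi hj; rewrite /G !conj_rfc //; congr Defs.esym; lia.
Qed.
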